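(* Let $n\ge1$, fix $a\in\{0,1\}$ and a time $t\in\{0,1,\dots,t_{\max}\}$, and let $U=\{u\in\{0,\dots,t_{\max}\}:u\le t\}$. Given data $X_1,\dots,X_n\in\mathcal X$, indicators $\iota_{iu}=\mathbf 1(A_i=a,G_i^u=1)\in\{0,1\}$ and real numbers $\hat r_{iu}=\hat r_u(X_i,a)$ for $i\le n$, $u\in U$, and a norm $\|\cdot\|$ on a vector space of real functions on $\mathcal X$, and $\sigma>0$, suppose $\hat\omega\in\mathbb R^{n\times U}$ minimizes $$I(\omega)^2+\frac{\sigma^2}{nt}\sum_{i=1}^n\sum_{u\in U}\hat r_{iu}^2\iota_{iu}\omega_{iu}^2,\qquad I(\omega)=\sup_{\sum_{u\in U}\|h_u\|^2\le1}\frac1n\sum_{i=1}^n\sum_{u\in U}\big\{\hat r_{iu}h_u(X_i)-\iota_{iu}\hat r_{iu}\omega_{iu}h_u(X_i)\big\}.$$ Then for each $u\in U$, the vector $\hat\omega_u=(\hat\omega_{1u},\dots,\hat\omega_{nu})$ minimizes over $\omega_u\in\mathbb R^n$ $$I_u(\omega_u)^2+\frac{\sigma^2}{nt}\sum_{i=1}^n\hat r_{iu}^2\iota_{iu}\omega_{iu}^2,\qquad I_u(\omega_u)=\sup_{\|h_u\|\le1}\frac1n\sum_{i=1}^n\big\{\hat r_{iu}h_u(X_i)-\iota_{iu}\hat r_{iu}\omega_{iu}h_u(X_i)\big\}.$$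
   Context: Here $A_i\in\{0,1\}$ is a treatment indicator, $G_i^u=\mathbf 1(\tilde T_i\ge u)$ is an at-risk indicator, and $\hat r_u(x,a)$ are given real-valued functions; in the paper $\hat r_u(x,a)=-\hat S_t(x,a)\hat S_{u-1}(x,a)/\hat S_u(x,a)$ for an estimated survival function $\hat S$, but the statement holds for arbitrary real $\hat r_{iu}$. *)

(* Defs.v *)
From HB Require Import structures.
From mathcomp Require Import all_boot all_order all_algebra.
From mathcomp Require Import all_classical all_reals.
From mathcomp Require Import ereal topology normedtype.
Set Implicit Arguments. Unset Strict Implicit. Unset Printing Implicit Defensive.
Import Order.TTheory GRing.Theory Num.Theory.
Import numFieldNormedType.Exports.
Local Open Scope classical_set_scope.
Local Open Scope ring_scope.

(* Setting: H is a normed real vector space whose elements are real functions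
   on the covariate space X via the (linear, injective) evaluation map [ev].
   Index set U = {0,...,t} is modelled by 'I_t.+1.
   Data: Xs i = X_i, iota i u = iota_{iu} (a boolean, cast to {0,1}),
   r i u = hat r_{iu}, w i u = omega_{iu}. *)

Section Defs.
Variables (R : realType) (H : normedModType R) (X : Type)
  (ev : H -> X -> R) (n t : nat)
  (Xs : 'I_n -> X) (iota : 'I_n -> 'I_t.+1 -> bool) (r : 'I_n -> 'I_t.+1 -> R)
  (sigma : R).

Definition Ifull (w : 'I_n -> 'I_t.+1 -> R) : \bar R :=
  ereal_sup [set ((n%:R)^-1 * \sum_(i < n) \sum_(u < t.+1)
                   (r i u * ev (h u) (Xs i)
                    - (iota i u)%:R * r i u * w i u * ev (h u) (Xs i)))%:E
            | h in [set h : 'I_t.+1 -> H | \sum_(u < t.+1) `|h u| ^+ 2 <= 1]].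

Definition Iu (u : 'I_t.+1) (wu : 'I_n -> R) : \bar R :=
  ereal_sup [set ((n%:R)^-1 * \sum_(i < n)
                   (r i u * ev h (Xs i)
                    - (iota i u)%:R * r i u * wu i * ev h (Xs i)))%:E
            | h in [set h : H | `|h| <= 1]].

Definition objfull (w : 'I_n -> 'I_t.+1 -> R) : \bar R :=
  (Ifull w * Ifull w +
   (sigma ^+ 2 / (n%:R * t%:R) *
    \sum_(i < n) \sum_(u < t.+1) r i u ^+ 2 * (iota i u)%:R * w i u ^+ 2)%:E)%E.

Definition obju (u : 'I_t.+1) (wu : 'I_n -> R) : \bar R :=
  (Iu u wu * Iu u wu +
   (sigma ^+ 2 / (n%:R * t%:R) *
    \sum_(i < n) r i u ^+ 2 * (iota i u)%:R * wu i ^+ 2)%:E)%E.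

End Defs.

(* Main.v *)
Require Import Defs.
From HB Require Import structures.
From mathcomp Require Import all_boot all_order all_algebra.
From mathcomp Require Import all_classical all_reals.
From mathcomp Require Import ereal topology normedtype.
Import Order.TTheory GRing.Theory Num.Theory.
Import numFieldNormedType.Exports.
From mathcomp Require Import ring lra.
Local Open Scope ring_scope.

Set Implicit Arguments. Unset Strict Implicit.
Section Gen.
Variables (R : realType) (H : normedModType R) (m : nat) (L : 'I_m -> H -> R).
Hypothesis Llin : forall u c h1 h2, L u (c *: h1 + h2) = c * L u h1 + L u h2.

Definition Fs := ereal_sup [set (\sum_(u < m) L u (h u))%:E
   | h in [set h : 'I_m -> H | \sum_(u < m) `|h u| ^+ 2 <= 1]].
Definition Gs u := ereal_sup [set (L u h)%:E | h in [set h : H | `|h| <= 1]].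

Lemma L0 u : L u 0 = 0.
Proof. have := Llin u 1 0 0; rewrite scale1r addr0 mul1r; lra. Qed.

Lemma LZ u c h : L u (c *: h) = c * L u h.
Proof. by have := Llin u c h 0; rewrite addr0 L0 addr0. Qed.

Lemma Gs_ge0 u : (0 <= Gs u)%E.
Proof. apply: ereal_sup_ubound; exists 0; first by rewrite /= normr0.
by rewrite L0. Qed.

Lemma Fs_ge0 : (0 <= Fs)%E.
Proof. apply: ereal_sup_ubound; exists (fun _ => 0).
  by rewrite /= big1 // => u _; rewrite normr0 expr0n.
by rewrite big1 // => u _; rewrite L0. Qed.

Lemma Gs_le_Fs u : (Gs u <= Fs)%E.
Proof.
apply/ereal_supP => _ [h /= hh <-]; apply: ereal_sup_ubound.
exists (fun v => if v == u then h else 0).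
  rewrite /= (bigD1 u) //= eqxx big1 ?addr0.
    by rewrite expr2; apply: mulr_ile1 => //.
  by move=> v /negbTE ->; rewrite normr0 expr0n.
rewrite (bigD1 u) //= eqxx big1 ?addr0 // => v /negbTE ->; exact: L0.
Qed.

Lemma L_le u c h : Gs u = c%:E -> L u h <= c * `|h|.
Proof.
move=> Gc; have [->|hn0] := eqVneq h 0; first by rewrite L0 normr0 mulr0.
have np : 0 < `|h| by rewrite normr_gt0.
have : ((L u (`|h|^-1 *: h))%:E <= Gs u)%E.
  apply: ereal_sup_ubound; exists (`|h|^-1 *: h) => //=.
  by rewrite normrZ normrV ?unitfE ?gt_eqF // normr_id mulVf ?gt_eqF.
rewrite Gc lee_fin LZ => H1.
have := ler_wpM2l (ltW np) H1; rewrite mulrA mulfV ?gt_eqF // mul1r.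
by rewrite mulrC.
Qed.

Lemma Fs_upper (c : 'I_m -> R) : (forall u, Gs u = (c u)%:E) ->
  (Fs <= (Num.sqrt (\sum_u c u ^+ 2))%:E)%E.
Proof.
move=> Gc; set S := Num.sqrt _.
have c0 u : 0 <= c u by have := Gs_ge0 u; rewrite Gc lee_fin.
have S2 : S ^+ 2 = \sum_u c u ^+ 2 by rewrite sqr_sqrtr //; apply: sumr_ge0 => u _; exact: sqr_ge0.
apply/ereal_supP => _ [h /= hh <-]; rewrite lee_fin.
apply: (@le_trans _ _ (\sum_u c u * `|h u|)).
  by apply: ler_sum => u _; exact: L_le.
have [S0|Sp] := eqVneq S 0.
  have cz : forall u, c u = 0.
    move=> u; have := psumr_eq0P (P := predT) (F := fun u => c u ^+ 2).
    move=> /(_ (fun u _ => sqr_ge0 _)); rewrite -S2 S0 expr0n => /(_ erefl u erefl).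
    by move/eqP; rewrite sqrf_eq0 => /eqP.
  by rewrite S0 big1 // => u _; rewrite cz mul0r.
have Spos : 0 < S by rewrite lt_neqAle eq_sym Sp sqrtr_ge0.
apply: (@le_trans _ _ (\sum_u (c u ^+ 2 / (2 * S) + S * `|h u| ^+ 2 / 2))).
  apply: ler_sum => u _.
  have key : 0 <= (c u - S * `|h u|) ^+ 2 by exact: sqr_ge0.
  rewrite -subr_ge0.
  have -> : c u ^+ 2 / (2 * S) + S * `|h u| ^+ 2 / 2 - c u * `|h u|
           = (c u - S * `|h u|) ^+ 2 / (2 * S).
    by field; rewrite gt_eqF.
  by apply: divr_ge0 => //; rewrite mulr_ge0 // ltW.
rewrite big_split /= -mulr_suml -S2 -mulr_suml -mulr_sumr.
have : S * (\sum_i `|h i| ^+ 2) <= S by rewrite ler_piMr // ltW.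
have -> : S ^+ 2 / (2 * S) = S / 2 by field; rewrite gt_eqF.
lra.
Qed.

Lemma Fs_lower (c : 'I_m -> R) : (forall u, Gs u = (c u)%:E) ->
  ((Num.sqrt (\sum_u c u ^+ 2))%:E <= Fs)%E.
Proof.
move=> Gc; set S := Num.sqrt _.
have c0 u : 0 <= c u by have := Gs_ge0 u; rewrite Gc lee_fin.
have S2 : S ^+ 2 = \sum_u c u ^+ 2 by rewrite sqr_sqrtr //; apply: sumr_ge0 => u _; exact: sqr_ge0.
have [S0|Sp] := eqVneq S 0; first by rewrite S0 Fs_ge0.
have Spos : 0 < S by rewrite lt_neqAle eq_sym Sp sqrtr_ge0.
set K := \sum_u c u / S.
have K0 : 0 <= K by apply: sumr_ge0 => u _; rewrite divr_ge0 // ltW.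
have key : forall e, 0 < e -> ((S - e * K)%:E <= Fs)%E.
  move=> e ep.
  have ex : forall u, exists h : H, `|h| <= 1 /\ c u - e < L u h.
    move=> u; have : ((c u - e)%:E < Gs u)%E by rewrite Gc lte_fin ltrBlDr ltrDl.
    by move/ereal_sup_gt => [_ [h hh <-]]; rewrite lte_fin => lt; exists h.
  have [f hf] := choice ex.
  apply: (@le_trans _ _ (\sum_u L u ((c u / S) *: f u))%:E); last first.
    apply: ereal_sup_ubound; exists (fun u => (c u / S) *: f u) => //.
    rewrite /=.
    apply: (@le_trans _ _ (\sum_u (c u / S) ^+ 2)).
      apply: ler_sum => u _; rewrite normrZ exprMn ger0_norm; last by rewrite divr_ge0 // ltW.
      have [h1 _] := hf u.
      apply: ler_piMr; first exact: sqr_ge0.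
      by rewrite expr2 mulr_ile1.
    under eq_bigr do rewrite expr_div_n.
    by rewrite -mulr_suml -S2 mulfV // expf_neq0.
  rewrite lee_fin /K mulr_sumr.
  apply: (@le_trans _ _ (\sum_u (c u / S) * L u (f u))); last first.
    by apply: ler_sum => u _; rewrite LZ.
  have SE : S = \sum_u (c u / S) * c u.
    transitivity ((\sum_u c u ^+ 2) / S); first by rewrite -S2 expr2 -mulrA mulfV ?mulr1.
    by rewrite mulr_suml; apply: eq_bigr => u _; rewrite expr2 mulrAC.
  rewrite {1}SE -sumrB; apply: ler_sum => u _; have [_ h2] := hf u.
  rewrite [e * _]mulrC -mulrBr; apply: ler_wpM2l; first by rewrite divr_ge0 // ltW.
  lra.
case E : Fs => [f| |]; last by have := Fs_ge0; rewrite E.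
  2: by rewrite leey.
rewrite lee_fin leNgt; apply/negP => fS.
set d := (S - f) / (K + 1).
have dp : 0 < d by rewrite divr_gt0 // ?subr_gt0 //; lra.
have dK : d * K + d = S - f by rewrite /d; field; lra.
have := key d dp; rewrite E lee_fin; lra.
Qed.
End Gen.


Theorem lemma1 (R : realType) (H : normedModType R) (X : Type)
  (ev : H -> X -> R)
  (ev_linear : forall (c : R) (h1 h2 : H) (x : X),
      ev (c *: h1 + h2) x = c * ev h1 x + ev h2 x)
  (ev_inj : injective ev)
  (n tmax t : nat) (hn : (1 <= n)%N) (ht : (t <= tmax)%N)
  (Xs : 'I_n -> X) (iota : 'I_n -> 'I_t.+1 -> bool) (r : 'I_n -> 'I_t.+1 -> R)
  (sigma : R) (hsigma : 0 < sigma)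
  (what : 'I_n -> 'I_t.+1 -> R)
  (hfin : (objfull ev Xs iota r sigma what < +oo)%E)
  (hmin : forall w : 'I_n -> 'I_t.+1 -> R,
      (objfull ev Xs iota r sigma what <= objfull ev Xs iota r sigma w)%E) :
  forall (u : 'I_t.+1) (wu : 'I_n -> R),
    (obju ev Xs iota r sigma u (fun i => what i u)
     <= obju ev Xs iota r sigma u wu)%E.
Proof.
set L := fun (w : 'I_n -> 'I_t.+1 -> R) (v : 'I_t.+1) (h : H) =>
  n%:R^-1 * \sum_(i < n) (r i v * ev h (Xs i)
     - (iota i v)%:R * r i v * w i v * ev h (Xs i)).
have Llin : forall w v c h1 h2, L w v (c *: h1 + h2) = c * L w v h1 + L w v h2.
  move=> w v c h1 h2; rewrite /L !mulr_sumr -big_split /=.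
  by apply: eq_bigr => i _; rewrite ev_linear; ring.
have IfE : forall w, Ifull ev Xs iota r w = Fs (L w).
  move=> w; rewrite /Ifull /Fs; congr ereal_sup; apply: eq_imagel => h _.
  by rewrite /L exchange_big mulr_sumr.
have IuE : forall w v, Iu ev Xs iota r v (fun i => w i v) = Gs (L w) v.
  by [].
set p := fun (v : 'I_t.+1) (x : 'I_n -> R) =>
  sigma ^+ 2 / (n%:R * t%:R) * \sum_(i < n) r i v ^+ 2 * (iota i v)%:R * x i ^+ 2.
have objE : forall w c, (forall v, Gs (L w) v = (c v)%:E) ->
    objfull ev Xs iota r sigma w = (\sum_v (c v ^+ 2 + p v (fun i => w i v)))%:E.
  move=> w c Hc; rewrite /objfull IfE.
  have e1 := Fs_upper (Llin w) Hc; have e2 := Fs_lower (Llin w) Hc.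
  rewrite (le_anti (andb_true_intro (conj e1 e2))) -EFinM -EFinD.
  have s0 : 0 <= \sum_v c v ^+ 2 by apply: sumr_ge0 => v _; exact: sqr_ge0.
  rewrite -expr2 sqr_sqrtr // big_split /=; congr (_ + _)%:E.
  by rewrite /p exchange_big mulr_sumr.
move=> u wu.
have fin0 : forall (x : \bar R) y, (0 <= x)%E -> (x <= y%:E)%E -> x = (fine x)%:E.
  by move=> [x| |] y.
have [F FE] : exists F, Ifull ev Xs iota r what = F%:E.
  move: hfin; rewrite /objfull.
  have := Fs_ge0 (Llin what); rewrite -IfE.
  case: (Ifull ev Xs iota r what) => [F| |] //; first by move=> *; exists F.
set c := fun v => fine (Gs (L what) v).
have Hc : forall v, Gs (L what) v = (c v)%:E.
  move=> v; apply: (fin0 _ F); first exact: Gs_ge0.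
  by rewrite -FE IfE; exact: Gs_le_Fs.
case Eu : (Iu ev Xs iota r u wu) => [cu| |]; last 2 first.
- by rewrite /obju Eu mulyy addye // leey.
- by have := Gs_ge0 (Llin (fun i _ => wu i)) u; rewrite -(IuE (fun i _ => wu i)) Eu.
set w' := fun i v => if v == u then wu i else what i v.
set d := fun v => if v == u then cu else c v.
have Hd : forall v, Gs (L w') v = (d v)%:E.
  move=> v; rewrite -IuE /w' /d; case: (v =P u) => [->|_]; first exact: Eu.
  rewrite IuE; exact: Hc.
have := hmin w'; rewrite (objE _ _ Hc) (objE _ _ Hd) lee_fin.
rewrite (bigD1 u) // [X in _ <= X](bigD1 u) //=.
have -> : \sum_(v | v != u) (d v ^+ 2 + p v (fun i => w' i v))
        = \sum_(v | v != u) (c v ^+ 2 + p v (fun i => what i v)).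
  by apply: eq_bigr => v /negbTE vu; rewrite /d /w' vu.
rewrite /d /w' eqxx => Hle.
rewrite /obju (IuE what u) Hc Eu -!EFinM -!EFinD lee_fin -!expr2.
move: Hle; rewrite /p lerD2r; exact: id.
Qed.
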